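(* Assume the no-anticipation, common-support and transition-independence conditions stated in the context. Then for every $t=T_0+1,\dots,T$, \[ \boldsymbol\mu^{\mathrm{ATT}}_t=\mathbb{E}\Big[\mathbf X_t-\mathbb{E}\big[\mathbf X_t\mid \mathbf X_1^{T_0},D=0\big]\;\Big|\;D=1\Big]. \]
   Context: Fix integers $T_0\ge1$, $T_1\ge1$, $T=T_0+T_1$, $K\ge2$, and a set of $K$ outcome categories $\mathcal Y=\{\bar y^{(1)},\dots,\bar y^{(K)}\}$. On a probability space, a unit has a binary treatment indicator $D\in\{0,1\}$ (treated units, $D=1$, are untreated in periods $1,\dots,T_0$ and treated in all periods $T_0+1,\dots,T$; control units are never treated) and potential outcomes $Y_t(0),Y_t(1)\in\mathcal Y$, $t=1,\dots,T$. For $d\in\{0,1\}$ let $\mathbf X_t(d)=(\mathbf 1(Y_t(d)=\bar y^{(1)}),\dots,\mathbf 1(Y_t(d)=\bar y^{(K)}))^\top\in\mathcal X:=\{x\in\{0,1\}^K:\sum_{k=1}^K x^{(k)}=1\}$. The observed outcome vectors are $\mathbf X_t=\mathbf X_t(0)$ for $1\le t\le T_0$ and $\mathbf X_t=D\mathbf X_t(1)+(1-D)\mathbf X_t(0)$ for $t\ge T_0+1$. Write $\mathbf X_1^{T_0}=(\mathbf X_1,\dots,\mathbf X_{T_0})$ and $\mathbf X_1^{T_0}(0)=(\mathbf X_1(0),\dots,\mathbf X_{T_0}(0))$. The average treatment effect on the treated is $\boldsymbol\mu^{\mathrm{ATT}}_t=\mathbb{E}[\mathbf X_t(1)-\mathbf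 X_t(0)\mid D=1]$ for $t\ge T_0+1$. Conditional probabilities/expectations are taken only given events of positive probability. No anticipation: $\mathbf X_t(1)=\mathbf X_t(0)$ for all $t\in\{1,\dots,T_0\}$. Common support: there is $\epsilon>0$ such that for every $\mathbf x_1^{T_0}\in\mathcal X^{T_0}$ with $\Pr(\mathbf X_1^{T_0}=\mathbf x_1^{T_0})>0$, $\epsilon\le\Pr(D=1\mid\mathbf X_1^{T_0}=\mathbf x_1^{T_0})<1-\epsilon$. Transition independence: for every $t=T_0+1,\dots,T$, all $\mathbf x_t\in\mathcal X$ and all $\mathbf x_1^{T_0}\in\mathcal X^{T_0}$, $\Pr(\mathbf X_t(0)=\mathbf x_t\mid \mathbf X_1^{T_0}(0)=\mathbf x_1^{T_0},D=1)=\Pr(\mathbf X_t(0)=\mathbf x_t\mid \mathbf X_1^{T_0}(0)=\mathbf x_1^{T_0},D=0)$. *)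

(* Defs.v *)
From HB Require Import structures.
From mathcomp Require Import all_boot all_order all_algebra.
From mathcomp Require Import all_classical all_reals all_analysis.
Set Implicit Arguments. Unset Strict Implicit. Unset Printing Implicit Defensive.
Import Order.TTheory GRing.Theory Num.Theory.
Local Open Scope classical_set_scope.
Local Open Scope ring_scope.

Section Defs.
Context {R : realType} {d : measure_display} {Omega : measurableType d}.

Definition condP (P : probability Omega R) (A B : set Omega) : R :=
  fine (P (A `&` B)) / fine (P B).

Definition condE (P : probability Omega R) (A : set Omega) (f : Omega -> R) : R :=
  fine (\int[P]_(w in A) (f w)%:E)%E / fine (P A).

Definition in_calX (K : nat) (v : 'I_K -> R) : Prop :=
  (forall k, v k = 0 \/ v k = 1) /\ \sum_(k < K) v k = 1.

Definition onehot (K : nat) (y : 'I_K) : 'I_K -> R := fun k => (y == k)%:R.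

Definition Xobs (K T0 : nat) (Y0 Y1 : nat -> Omega -> 'I_K) (D : Omega -> bool)
  (t : nat) (w : Omega) : 'I_K -> R :=
  if (t <= T0)%N then onehot (Y0 t w)
  else (fun k => (D w)%:R * onehot (Y1 t w) k + (1 - (D w)%:R) * onehot (Y0 t w) k).

Definition pre_event (K T0 : nat) (Y0 Y1 : nat -> Omega -> 'I_K) (D : Omega -> bool)
  (xs : nat -> 'I_K -> R) : set Omega :=
  [set w | forall s, (1 <= s <= T0)%N -> Xobs T0 Y0 Y1 D s w = xs s].

Definition pre_event0 (K T0 : nat) (Y0 : nat -> Omega -> 'I_K)
  (xs : nat -> 'I_K -> R) : set Omega :=
  [set w | forall s, (1 <= s <= T0)%N -> onehot (Y0 s w) = xs s].

(* The random variable  w |-> E[X_t^(k) | X_1^{T0}, D = 0](w)  (elementary version,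
   the conditioning event being {X_1^{T0} = X_1^{T0}(w), D = 0}). *)
Definition condE_pre_D0 (K T0 : nat) (Y0 Y1 : nat -> Omega -> 'I_K) (D : Omega -> bool)
  (P : probability Omega R) (t : nat) (k : 'I_K) (w : Omega) : R :=
  condE P (pre_event T0 Y0 Y1 D (fun s => Xobs T0 Y0 Y1 D s w) `&` [set w' | D w' = false])
    (fun w' => Xobs T0 Y0 Y1 D t w' k).

End Defs.

(* Main.v *)
Require Import Defs.
From HB Require Import structures.
From mathcomp Require Import all_boot all_order all_algebra.
From mathcomp Require Import all_classical all_reals all_analysis.
From mathcomp Require Import lra.
Import Order.TTheory GRing.Theory Num.Theory.
Local Open Scope classical_set_scope.
Local Open Scope ring_scope.

Section Helpers.
Context {R : realType} {d : measure_display} {Omega : measurableType d}.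
Variable P : probability Omega R.

Lemma P_fin (A : set Omega) : measurable A -> P A = (fine (P A))%:E.
Proof. by move=> mA; rewrite fineK// fin_num_measure. Qed.

Lemma int_indic (A B : set Omega) : measurable A -> measurable B ->
  P.-integrable A (EFin \o \1_B).
Proof.
move=> mA mB; apply: (@integrableS _ _ _ P setT) => //.
exact: (integrable_indic P mB).
Qed.

Lemma int_fin (A : set Omega) (f : Omega -> R) : measurable A ->
  P.-integrable A (EFin \o f) ->
  (\int[P]_(x in A) f x)%:E = (\int[P]_(x in A) (f x)%:E)%E.
Proof. by move=> mA fi; rewrite fineK//; exact: integrable_fin_num. Qed.

Lemma Rint_indic (A B : set Omega) : measurable A -> measurable B ->
  \int[P]_(x in A) \1_B x = fine (P (B `&` A)).
Proof. by move=> mA mB; rewrite /Rintegral integral_indic. Qed.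

Lemma Rint_sum (I : finType) (A : set Omega) (f : I -> Omega -> R) :
  measurable A -> (forall i, P.-integrable A (EFin \o f i)) ->
  \int[P]_(x in A) (\sum_i f i x) = \sum_i \int[P]_(x in A) f i x.
Proof.
move=> mA fi; apply: EFin_inj; rewrite int_fin//; last first.
  apply: (eq_integrable mA (fun x => \sum_i (f i x)%:E)%E) => //.
    by move=> x _; rewrite sumEFin.
  by apply: (integrable_sum mA) => i _; exact: fi.
rewrite -sumEFin.
under eq_integral do rewrite -sumEFin.
rewrite (integral_sum mA)//.
apply: eq_bigr => i _; rewrite int_fin//.
Qed.


Lemma int_sumZ (I : finType) (A : set Omega) (r : I -> R) (C : I -> set Omega) :
  measurable A -> (forall i, measurable (C i)) ->
  P.-integrable A (EFin \o (fun w => \sum_i r i * \1_(C i) w)).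
Proof.
move=> mA mC.
apply: (eq_integrable mA (fun x => \sum_i ((r i)%:E * (\1_(C i) x)%:E))%E).
  by move=> x _; rewrite /= -sumEFin; apply: eq_bigr => i _; rewrite EFinM.
apply: (integrable_sum mA) => i _.
apply: integrableZl => //; exact: int_indic.
Qed.

Lemma int_Z (A C : set Omega) (r : R) : measurable A -> measurable C ->
  P.-integrable A (EFin \o (fun w => r * \1_C w)).
Proof.
move=> mA mC.
apply: (eq_integrable mA (fun x => ((r)%:E * (\1_C x)%:E))%E).
  by move=> x _; rewrite /= EFinM.
apply: integrableZl => //; exact: int_indic.
Qed.

End Helpers.

Lemma onehot_inj (R : realType) (K : nat) (y y' : 'I_K) :
  onehot (R:=R) y = onehot (R:=R) y' -> y = y'.
Proof.
move=> /(congr1 (fun f => f y)); rewrite /onehot eqxx.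
by case: eqP => // _ /eqP; rewrite oner_eq0.
Qed.

Lemma onehot_calX (R : realType) (K : nat) (y : 'I_K) : in_calX (onehot (R:=R) y).
Proof.
split.
  by move=> k; rewrite /onehot; case: (y == k); [right|left].
rewrite (bigD1 y)//= big1 ?addr0 /onehot ?eqxx//.
by move=> i /negbTE; rewrite eq_sym => ->.
Qed.

Lemma onehot_indic (R : realType) (T : Type) (K : nat) (Y : T -> 'I_K) k w :
  onehot (R:=R) (Y w) k = \1_[set w | Y w = k] w.
Proof.
rewrite /onehot indicE; have [e|ne] := eqVneq (Y w) k.
  by rewrite mem_set.
by rewrite memNset //; apply/eqP.
Qed.

Section Cells.
Context {R : realType} {d : measure_display} {Omega : measurableType d}.
Variables (T0 K : nat) (D : Omega -> bool) (Y0 Y1 : nat -> Omega -> 'I_K).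

Definition Fv (w : Omega) : {ffun 'I_T0 -> 'I_K} := [ffun i : 'I_T0 => Y0 i.+1 w].
Definition cell (c : {ffun 'I_T0 -> 'I_K}) : set Omega := [set w | Fv w = c].

Lemma FvP w w0 : Fv w = Fv w0 <-> (forall s, (1 <= s <= T0)%N -> Y0 s w = Y0 s w0).
Proof.
split.
  move=> /ffunP H s /andP[s1 sT].
  have sT' : (s.-1 < T0)%N by rewrite prednK.
  have := H (Ordinal sT'); rewrite !ffunE /= prednK //.
move=> H; apply/ffunP => i; rewrite !ffunE; apply: H.
by rewrite ltn_ord.
Qed.

Lemma cell_meas c : (forall t (k : 'I_K), measurable [set w | Y0 t w = k]) ->
  measurable (cell c).
Proof.
move=> mY.
have -> : cell c = \bigcap_(i in [set: 'I_T0]) [set w | Y0 i.+1 w = c i].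
  apply/seteqP; split => w /=.
    by move=> <- i _; rewrite ffunE.
  by move=> H; apply/ffunP => i; rewrite ffunE; apply: H.
apply: fin_bigcap_measurable => //; exact: finite_finset.
Qed.

Lemma Xobs_pre s w : (s <= T0)%N -> Xobs T0 Y0 Y1 D s w = onehot (R:=R) (Y0 s w).
Proof. by move=> sT; rewrite /Xobs sT. Qed.

Lemma Xobs_post1 t w k : (T0 < t)%N -> D w ->
  Xobs T0 Y0 Y1 D t w k = onehot (R:=R) (Y1 t w) k.
Proof.
by move=> tT Dw; rewrite /Xobs leqNgt tT /= Dw subrr mul0r addr0 mul1r.
Qed.

Lemma Xobs_post0 t w k : (T0 < t)%N -> D w = false ->
  Xobs T0 Y0 Y1 D t w k = onehot (R:=R) (Y0 t w) k.
Proof.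
by move=> tT Dw; rewrite /Xobs leqNgt tT /= Dw subr0 mul0r add0r mul1r.
Qed.

Lemma pre_cell (xs : nat -> 'I_K -> R) w0 :
  (forall s, (1 <= s <= T0)%N -> xs s = onehot (Y0 s w0)) ->
  pre_event T0 Y0 Y1 D xs = cell (Fv w0) /\ pre_event0 T0 Y0 xs = cell (Fv w0).
Proof.
move=> hx; split; apply/seteqP; split => w /=.
- move=> H; apply/FvP => s sT; apply: (@onehot_inj R).
  by rewrite -hx // -H // Xobs_pre //; case/andP: sT.
- move=> /FvP H s sT; rewrite Xobs_pre; last by case/andP: sT.
  by rewrite H // hx.
- move=> H; apply/FvP => s sT; apply: (@onehot_inj R).
  by rewrite -hx // -H.
- by move=> /FvP H s sT; rewrite H // hx.
Qed.

End Cells.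

Theorem proposition1 (R : realType) (d : measure_display) (Omega : measurableType d)
  (P : probability Omega R) (T0 T1 K : nat)
  (D : Omega -> bool) (Y0 Y1 : nat -> Omega -> 'I_K) :
  (1 <= T0)%N -> (1 <= T1)%N -> (2 <= K)%N ->
  measurable [set w | D w] ->
  (forall t (k : 'I_K), measurable [set w | Y0 t w = k]) ->
  (forall t (k : 'I_K), measurable [set w | Y1 t w = k]) ->
  (forall t, (1 <= t <= T0)%N -> forall w, onehot (R:=R) (Y1 t w) = onehot (R:=R) (Y0 t w)) ->
  (exists eps : R, 0 < eps /\
     forall xs : nat -> 'I_K -> R,
       (forall s, (1 <= s <= T0)%N -> in_calX (xs s)) ->
       (0 < P (pre_event T0 Y0 Y1 D xs))%E ->
       eps <= condP P [set w | D w] (pre_event T0 Y0 Y1 D xs) < 1 - eps) ->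
  (forall t, (T0 + 1 <= t <= T0 + T1)%N ->
     forall (x : 'I_K -> R) (xs : nat -> 'I_K -> R),
       in_calX x -> (forall s, (1 <= s <= T0)%N -> in_calX (xs s)) ->
       (0 < P (pre_event0 T0 Y0 xs `&` [set w | D w = true]))%E ->
       (0 < P (pre_event0 T0 Y0 xs `&` [set w | D w = false]))%E ->
       condP P [set w | onehot (R:=R) (Y0 t w) = x] (pre_event0 T0 Y0 xs `&` [set w | D w = true])
       = condP P [set w | onehot (R:=R) (Y0 t w) = x] (pre_event0 T0 Y0 xs `&` [set w | D w = false])) ->
  forall t, (T0 + 1 <= t <= T0 + T1)%N -> forall k : 'I_K,
    condE P [set w | D w] (fun w => onehot (R:=R) (Y1 t w) k - onehot (R:=R) (Y0 t w) k)
    = condE P [set w | D w]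
        (fun w => Xobs T0 Y0 Y1 D t w k - condE_pre_D0 T0 Y0 Y1 D P t k w).
Proof.
move=> T0ge T1ge K2 mS mY0 mY1 noant [eps [eps0 CS]] TI t tI k.
have tT : (T0 < t)%N by case/andP: tI; rewrite addn1.
set S := [set w | D w].
set Sf := [set w | D w = false].
have mSf : measurable Sf.
  have -> : Sf = ~` S.
    by rewrite /Sf /S; apply/seteqP; split => w /=; case: (D w).
  exact: measurableC.
set B0 := [set w | Y0 t w = k].
set B1 := [set w | Y1 t w = k].
have mB0 : measurable B0 by exact: mY0.
have mB1 : measurable B1 by exact: mY1.
have mcell := fun c => @cell_meas d Omega T0 K Y0 c mY0.
set cellc := cell T0 K Y0.
set F := Fv T0 K Y0.
set gc := fun c : {ffun 'I_T0 -> 'I_K} =>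
  condE P (cellc c `&` Sf) (fun w' => Xobs T0 Y0 Y1 D t w' k).
rewrite /condE; congr (_ / _).
change (\int[P]_(w in S) (onehot (R:=R) (Y1 t w) k - onehot (R:=R) (Y0 t w) k) =
  \int[P]_(w in S) (Xobs T0 Y0 Y1 D t w k - condE_pre_D0 T0 Y0 Y1 D P t k w)).
rewrite (@eq_Rintegral _ _ _ P S (fun w => \1_B1 w - \1_B0 w)); last first.
  by move=> w _; rewrite !onehot_indic.
rewrite [RHS](@eq_Rintegral _ _ _ P S (fun w => \1_B1 w - \sum_c gc c * \1_(cellc c) w)); last first.
  move=> w; rewrite inE => Dw; rewrite Xobs_post1 // onehot_indic; congr (_ - _).
  rewrite /condE_pre_D0 (proj1 (pre_cell T0 K D Y0 Y1 (fun s => Xobs T0 Y0 Y1 D s w) w _)); last first.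
    by move=> s /andP[_ sT]; rewrite Xobs_pre.
  rewrite (bigD1 (F w)) //= big1 ?addr0.
    by rewrite indicE mem_set // mulr1.
  move=> c /negbTE neq; rewrite indicE memNset ?mulr0 //.
  by move=> /= e; rewrite /F e eqxx in neq.
rewrite !RintegralB //; try (by apply: (int_indic P)); try (by apply: (int_sumZ P)).
congr (_ - _).
rewrite (@eq_Rintegral _ _ _ P S (fun w => \sum_c \1_(B0 `&` cellc c) w)); last first.
  move=> w _; rewrite (bigD1 (F w)) //= big1 ?addr0.
    by rewrite !indicE in_setI (@mem_set _ (cellc (F w)) w) ?andbT.
  move=> c /negbTE neq; rewrite indicE memNset //.
  by move=> /= [_ e]; rewrite /F e eqxx in neq.
rewrite (Rint_sum P) ?(Rint_sum P) //; last first.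
  by move=> c; apply: (int_indic P) => //; exact: measurableI.
  by move=> c; apply: (int_Z P) => //.
apply: eq_bigr => c _.
rewrite RintegralZl //; last by apply: (int_indic P).
rewrite !(Rint_indic P) //; last exact: measurableI.
have mC : measurable (cellc c) := mcell c.
have mCS : measurable (cellc c `&` S) := measurableI _ _ mC mS.
have [P0|Pn0] := eqVneq (P (cellc c `&` S)) 0%E.
  rewrite P0 mulr0.
  have -> : P (B0 `&` cellc c `&` S) = 0%E.
    apply/eqP; rewrite eq_le measure_ge0 andbT -P0; apply: le_measure; rewrite ?inE.
    - by apply: measurableI => //; exact: measurableI.
    - exact: mCS.
    - by rewrite -setIA; exact: subIsetr.
  by [].
have Ppos : (0 < P (cellc c `&` S))%E by rewrite lt0e Pn0 measure_ge0.
have : cellc c `&` S !=set0.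
  by apply/set0P; apply: contra_neq Pn0 => ->; exact: measure0.
case=> w0 [Cw0 Dw0].
have Fc : F w0 = c := Cw0.
subst c.
set C := cellc (F w0).
set xs := fun s => onehot (R:=R) (Y0 s w0).
have [pe pe0] := pre_cell T0 K D Y0 Y1 xs w0 (fun s _ => erefl).
have calX : forall s, (1 <= s <= T0)%N -> in_calX (xs s).
  by move=> s _; exact: onehot_calX.
have PC : (0 < P (pre_event T0 Y0 Y1 D xs))%E.
  rewrite pe; apply: (lt_le_trans Ppos); apply: le_measure; rewrite ?inE //.
have [_ CSlt] := andP (CS xs calX PC).
rewrite /condP pe in CSlt.
have mCSf : measurable (C `&` Sf) := measurableI _ _ mC mSf.
have decomp : P C = (P (C `&` S) + P (C `&` Sf))%E.
  rewrite -measureU //.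
    congr (P _); apply/seteqP; split => w /=.
      by move=> Cw; case Dw: (D w); [left|right].
    by case=> -[].
  rewrite /S /Sf; apply/seteqP; split => w //= [[_ Dw] [_ Dw']].
  by rewrite Dw in Dw'.
have fpos : 0 < fine (P (C `&` S)).
  by apply: fine_gt0; rewrite Ppos /= ltey_eq fin_num_measure.
have PSf : (0 < P (C `&` Sf))%E.
  rewrite lt0e measure_ge0 andbT; apply/eqP => H0.
  move: CSlt; rewrite decomp H0 adde0 setIC divff ?gt_eqF //.
  move=> h; lra.
have := TI t tI (onehot k) xs (onehot_calX _ _ k) calX.
rewrite pe0 => /(_ Ppos PSf).
have eB0 : [set w | onehot (R:=R) (Y0 t w) = onehot k] = B0.
  by apply/seteqP; split => w /=; [exact: onehot_inj | move=> ->].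
rewrite eB0 => TIe.
rewrite /gc /condE.
have -> : fine (\int[P]_(w in C `&` Sf) (Xobs T0 Y0 Y1 D t w k)%:E)%E
    = \int[P]_(w in C `&` Sf) (Xobs T0 Y0 Y1 D t w k) by [].
rewrite (@eq_Rintegral _ _ _ P (C `&` Sf) (\1_B0)); last first.
  by move=> w; rewrite inE => -[_ Dw]; rewrite Xobs_post0 // onehot_indic.
rewrite (Rint_indic P) //.
have -> : fine (P (B0 `&` (C `&` Sf))) / fine (P (C `&` Sf))
   = condP P B0 (C `&` Sf) by [].
change [set w | D w = true] with S in TIe.
rewrite -TIe /condP mulfVK ?gt_eqF //.
by rewrite setIA.
Qed.
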